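(* Let $\pi_1,\dots,\pi_m$ be permutations and $t_1,\dots,t_m$ reals such that $\sum_{i\in[m]}t_iP_{\pi_i}=0$, and let $k=\max\{|\pi_1|,\dots,|\pi_m|\}$. Suppose that $\pi_1,\dots,\pi_n$ are exactly those among $\pi_1,\dots,\pi_m$ that have order $k$. Let $h$ be an integer with $2\le h\le k$ such that each of the remaining permutations $\pi_{n+1},\dots,\pi_m$ has order at most $h-1$. Let $\omega=t_1\pi_1+\dots+t_n\pi_n$. Then $$\mathrm{Cov}(\omega)\,\mathbf{b}_h=(0,\dots,0)^T\quad\text{and}\quad \mathbf{b}_h^T\,\mathrm{Cov}(\omega)=(0,\dots,0).$$
   Context: A $k$-permutation is a bijection of $[k]=\{1,\dots,k\}$; $|\pi|$ denotes the order. The gradient polynomial of a $k$-permutation $\pi$ is $P_\pi(\alpha,\beta)=k!\sum_{m\in[k]}\left(\frac{k-m}{1-\alpha}-\frac{m-1}{\alpha}\right)\left(\frac{k-\pi(m)}{1-\beta}-\frac{\pi(m)-1}{\beta}\right)\frac{\alpha^{m-1}(1-\alpha)^{k-m}\beta^{\pi(m)-1}(1-\beta)^{k-\pi(m)}}{(m-1)!(k-m)!(\pi(m)-1)!(k-\pi(m))!}$. The permutation matrix $A_\pi\in\mathbb{R}^{k\times k}$ has $(A_\pi)_{i,j}=1$ if $\pi(i)=j$ and $0$ otherwise. For a formal real linear combination $\omega=\sum_i t_i\pi_i$ of $k$-permutations, its cover matrix is $\mathrm{Cov}(\omega)=\sum_i t_iA_{\pi_i}\in\mathbb{R}^{k\times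 k}$. For $a\in[k]$, $\mathbf{b}_a=\mathbf{b}^k_a\in\mathbb{R}^k$ is the column vector with $(\mathbf{b}_a)_\ell=(-1)^{\ell-1}\binom{a-1}{\ell-1}$ for $1\le\ell\le a$ and $0$ for $\ell>a$. *)

(* Defs.v *)
From HB Require Import structures.
From mathcomp Require Import all_boot all_order fingroup perm all_algebra.
From mathcomp Require Import reals.
Set Implicit Arguments. Unset Strict Implicit. Unset Printing Implicit Defensive.
Import Order.TTheory GRing.Theory Num.Theory.
Local Open Scope ring_scope.

(* Indices are 0-based: position a : 'I_k stands for a+1 in [k]. *)

(* Gradient polynomial P_pi(alpha,beta) of a k-permutation pi, written
   literally (with m = a+1, pi(m) = p a + 1). *)
Definition gradP (R : realType) (k : nat) (p : 'S_k) (al be : R) : R :=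
  (k`!)%:R * \sum_(a < k)
    ((((k - a.+1)%N)%:R / (1 - al) - (a : nat)%:R / al) *
     (((k - (p a).+1)%N)%:R / (1 - be) - (p a : nat)%:R / be) *
     (al ^+ a * (1 - al) ^+ (k - a.+1) * be ^+ (p a) * (1 - be) ^+ (k - (p a).+1))
     / ((a`!)%:R * ((k - a.+1)`!)%:R * ((p a)`!)%:R * ((k - (p a).+1)`!)%:R)).

(* Permutation matrix of a k-permutation p, placed in a K x K matrix:
   entry (i,j) is 1 iff i = a and j = p a for some a < k.  When k = K this
   is exactly A_p ((A_p)_{i,j} = 1 iff p(i) = j). *)
Definition permMx (R : realType) (K k : nat) (p : 'S_k) : 'M[R]_K :=
  \matrix_(i < K, j < K) ([exists a : 'I_k, (val a == val i) && (val (p a) == val j)]%:R).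

Definition covMx (R : realType) (K m n : nat) (ks : 'I_m -> nat)
    (pis : forall i : 'I_m, 'S_(ks i)) (t : 'I_m -> R) : 'M[R]_K :=
  \sum_(i < m | (i < n)%N) t i *: permMx R K (pis i).

Definition bvec (R : realType) (K h : nat) : 'cV[R]_K :=
  \col_(l < K) (if (l < h)%N then (-1) ^+ l * ('C(h.-1, l))%:R else 0).

Definition maxord (m : nat) (ks : 'I_m -> nat) : nat := \big[maxn/0%N]_(j < m) ks j.

(* Main.v *)
Require Import Defs.
From HB Require Import structures.
From mathcomp Require Import all_boot all_order fingroup perm all_algebra.
From mathcomp Require Import reals.
From mathcomp Require Import ring lra zify.
Import Order.TTheory GRing.Theory Num.Theory.
Local Open Scope ring_scope.

Section S.
Variable R : realType.

Lemma coef_1subX (c i : nat) : ((1 - 'X : {poly R}) ^+ c)`_i = (-1) ^+ i * ('C(c, i))%:R.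
Proof.
elim: c i => [|c IH] i.
  by rewrite expr0 coef1; case: i => [|i]; rewrite ?bin0 ?bin0n ?mulr1 ?mulr0.
rewrite exprSr mulrBr mulr1 coefB mulrC coefXM IH.
case: i => [|i]; first by rewrite !bin0 /= ?subr0 ?sub0r.

rewrite IH /= binS natrD exprS mulrDr; ring.
Qed.

Definition D (k j : nat) : {poly R} :=
  (((j`!)%:R * ((k - j.+1)`!)%:R)^-1) *: - (('X^j * (1 - 'X) ^+ (k - j.+1))^`()).

Lemma fact_neq0 n : (n`!)%:R != 0 :> R.
Proof. by rewrite pnatr_eq0 -lt0n fact_gt0. Qed.

Lemma coefD k j l : (D k j)`_l =
  - (((j`!)%:R * ((k - j.+1)`!)%:R)^-1) * (l.+1)%:R *
   (if (j <= l.+1)%N then (-1) ^+ (l.+1 - j) * ('C(k - j.+1, l.+1 - j))%:R else 0).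
Proof.
rewrite /D coefZ coefN coef_deriv coefXnM coef_1subX.
rewrite ltnNge; case: (j <= l.+1)%N => /=; last by rewrite mul0rn mulr0 oppr0 mulr0.
move: (_^-1) ((-1) ^+ _ * _) => a b.
by rewrite -mulr_natr; ring.
Qed.

Definition mu (k l : nat) : R :=
  - (l.+1)%:R * (-1) ^+ l.+1 / ((l.+1)`!%:R * (k - l.+2)`!%:R).

Lemma mu_neq0 k l : mu k l != 0.
Proof.
rewrite /mu !mulf_neq0 ?invr_eq0 ?oppr_eq0 ?signr_eq0 ?pnatr_eq0 ?fact_neq0 //.
by rewrite mulf_neq0 ?fact_neq0.
Qed.

Lemma coefD_high k j l : (j < k)%N -> (k <= l.+1)%N -> (D k j)`_l = 0.
Proof.
move=> hj hk; rewrite coefD; case: ifP => hjl; last by rewrite mulr0.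
by rewrite bin_small ?mulr0 //; lia.
Qed.

Lemma sign_sub (a b : nat) : (a <= b)%N -> (-1) ^+ (b - a) = (-1) ^+ b * (-1) ^+ a :> R.
Proof.
move=> hab; rewrite -{2}(subnK hab) exprD -mulrA -exprD addnn.
by rewrite -mul2n exprM expr2 mulrNN mulr1 expr1n mulr1.
Qed.

Lemma coefD_mid k j l : (l.+2 <= k)%N ->
  (D k j)`_l = mu k l * ((-1) ^+ j * ('C(l.+1, j))%:R).
Proof.
move=> hk; rewrite coefD /mu; case: ifP => hjl; last first.
  by rewrite bin_small ?mulr0 //; lia.
rewrite sign_sub //.
have e1 := bin_fact (_ : (l.+1 - j <= k - j.+1)%N); have {}e1 := e1 ltac:(lia).
have e2 := bin_fact hjl.
have e3 : (k - j.+1 - (l.+1 - j) = k - l.+2)%N by lia.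
rewrite e3 in e1.
rewrite -e1 -e2 !natrM.
have := fact_neq0 j; have := fact_neq0 (l.+1 - j); have := fact_neq0 (k - l.+2).
have : ('C(k - j.+1, l.+1 - j))%:R != 0 :> R by rewrite pnatr_eq0 -lt0n bin_gt0; lia.
have : ('C(l.+1, j))%:R != 0 :> R by rewrite pnatr_eq0 -lt0n bin_gt0.
move: ('C(k - j.+1, l.+1 - j))%:R ('C(l.+1, j))%:R (j`!)%:R ((l.+1 - j)`!)%:R ((k - l.+2)`!)%:R.
move=> a b c d e ha hb hc hd he.
field.
by rewrite ha hb hc hd he.
Qed.

Lemma hornerDk k j (x : R) : x != 0 -> 1 - x != 0 ->
  (D k j).[x] = (((k - j.+1)%:R / (1 - x) - j%:R / x) * (x ^+ j * (1 - x) ^+ (k - j.+1)))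
     / ((j`!)%:R * ((k - j.+1)`!)%:R).
Proof.
move=> hx hx1; rewrite /D hornerZ hornerN.
move: (_^-1) => s.
rewrite derivM derivXn deriv_exp derivB derivX -polyC1 derivC polyC1 sub0r.
idtac.

have h1X2 : (1 - 'X : {poly R}).[x] = 1 - x by rewrite hornerD hornerN hornerX -polyC1 hornerC.
move: h1X2 => h1X.
move: (k - j.+1)%N => c.
case: j => [|j]; case: c => [|c] /=; rewrite ?expr0 ?exprS; do 3 rewrite ?hornerMn ?hornerM ?hornerXn ?hornerD ?hornerN ?hornerX ?hornerC ?horner_exp ?hornerB ?horner0.
all: rewrite ?h1X; field; by rewrite ?hx ?hx1.
Qed.

Lemma gradP_D k (p : 'S_k) (al be : R) : 0 < al < 1 -> 0 < be < 1 ->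
  gradP p al be = (k`!)%:R * \sum_(a < k) (D k a).[al] * (D k (p a)).[be].
Proof.
move=> /andP[a0 a1] /andP[b0 b1].
have ha : al != 0 by rewrite gt_eqF.
have hb : be != 0 by rewrite gt_eqF.
have ha1 : 1 - al != 0 by rewrite subr_eq0 eq_sym lt_eqF.
have hb1 : 1 - be != 0 by rewrite subr_eq0 eq_sym lt_eqF.
rewrite /gradP; congr (_ * _); apply: eq_bigr => a _; rewrite !hornerDk //.
have := fact_neq0 a; have := fact_neq0 (k - a.+1); have := fact_neq0 (p a); have := fact_neq0 (k - (p a).+1).
move: (a`!)%:R ((k - a.+1)`!)%:R ((p a)`!)%:R ((k - (p a).+1)`!)%:R => f1 f2 f3 f4 h4 h3 h2 h1.
move: ((k - a.+1)%:R / (1 - al) - a%:R / al) ((k - (p a).+1)%:R / (1 - be) - (p a)%:R / be) => u v.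
move: (al ^+ a) ((1 - al) ^+ (k - a.+1)) (be ^+ (p a)) ((1 - be) ^+ (k - (p a).+1)) => w1 w2 z1 z2.
field.
by rewrite h1 h2 h3 h4.
Qed.

Lemma poly_vanish (q : {poly R}) : (forall x : R, 0 < x < 1 -> q.[x] = 0) -> q = 0.
Proof.
move=> hq; apply/eqP; apply: contraT => nz.
pose rs := [seq ((i.+2)%:R : R)^-1 | i <- iota 0 (size q)].
have hall : all (root q) rs.
  apply/allP => x /mapP[i _ ->]; apply/rootP/hq.
  by rewrite invr_gt0 ltr0n /= invf_lt1 ?ltr0n // ltr1n.
have hu : uniq rs.
  rewrite map_inj_uniq ?iota_uniq //.
  by move=> i j /invr_inj /eqP; rewrite eqr_nat => /eqP [].
by have := max_poly_roots nz hall hu; rewrite size_map size_iota ltnn.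
Qed.

Lemma alt_sum (r : nat) : (0 < r)%N -> \sum_(0 <= a < r.+1) (-1) ^+ a * ('C(r, a))%:R = 0 :> R.
Proof.
move=> hr; rewrite big_mkord.
have := exprDn (1 : R) (-1) r; rewrite subrr expr0n gtn_eqF //= mulr0n => H; rewrite [RHS]H.
by apply: eq_bigr => i _; rewrite expr1n mul1r mulr_natr.
Qed.

Lemma finish K (z : 'I_K -> R) :
  (forall r, (0 < r < K)%N -> \sum_(a < K) z a * ((-1) ^+ a * ('C(r, a))%:R) = 0) ->
  \sum_(a < K) z a = 0 -> forall a, z a = 0.
Proof.
case: K z => [|K] z hr hs a; first by case: a.
pose w (i : nat) := z (inord i).
have hz : forall b : 'I_K.+1, z b = w b by move=> b; rewrite /w inord_val.
have hw : forall i, (i <= K)%N -> w i = w 0.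
  elim/ltn_ind => i IH hi; case: i IH hi => [|i] IH hi; first by [].
  have := hr i.+1 ltac:(lia).
  rewrite (eq_bigr (fun a : 'I_K.+1 => w a * ((-1) ^+ a * ('C(i.+1, a))%:R))); last first.
    by move=> b _; rewrite hz.
  rewrite -(big_mkord xpredT (fun a => w a * ((-1) ^+ a * ('C(i.+1, a))%:R))).
  rewrite (big_cat_nat (n := i.+2)) //=.
  rewrite [X in _ + X]big_nat_cond [X in _ + X]big1 ?addr0; last first.
    by move=> b /andP[/andP[hb _] _]; rewrite bin_small ?mulr0.
  rewrite big_nat_recr //= binn mulr1.
  rewrite (eq_big_nat _ _ (F2 := fun a => w 0 * ((-1) ^+ a * ('C(i.+1, a))%:R))); last first.
    by move=> b hb; rewrite IH //; lia.
  rewrite -mulr_sumr.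
  have := @alt_sum i.+1 isT; rewrite big_nat_recr //= binn mulr1 => /eqP.
  rewrite addr_eq0 => /eqP ->.
  rewrite mulrN addrC => /eqP; rewrite subr_eq0 => /eqP; apply: mulIf.
  by rewrite signr_eq0.
have w0 : w 0 = 0.
  have e : \sum_(b < K.+1) z b = \sum_(b < K.+1) w 0.
    by apply: eq_bigr => b _; rewrite hz hw // -ltnS ltn_ord.
  move: hs; rewrite e sumr_const card_ord => /eqP; rewrite mulrn_eq0 /=.
  by move/eqP.
by rewrite hz hw // -ltnS ltn_ord.
Qed.


Definition bn (h a : nat) : R := if (a < h)%N then (-1) ^+ a * ('C(h.-1, a))%:R else 0.

Lemma bn_alt h a : (0 < h)%N -> bn h a = (-1) ^+ a * ('C(h.-1, a))%:R.
Proof.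
move=> h0; rewrite /bn; case: ltnP => // ha.
by rewrite bin_small ?mulr0 //; lia.
Qed.

Lemma permMx_cast k K (p : 'S_k) (e : k = K) (l j : 'I_K) :
  permMx R K p l j = (((p (cast_ord (esym e) l)) : nat) == j)%:R.
Proof.
subst K; rewrite mxE cast_ord_id; congr ((nat_of_bool _)%:R).
apply/existsP/idP => [[a /andP[/eqP al pj]]|pj]; last by exists l; rewrite eqxx.
by have -> : l = a by apply: val_inj.
Qed.

Lemma sum_delta K (x : 'I_K) (g : 'I_K -> R) :
  \sum_(j < K) ((x : nat) == j)%:R * g j = g x.
Proof.
rewrite (bigD1 x) //= eqxx mul1r big1 ?addr0 // => j hj.
rewrite eq_sym in hj; have hj2 : (x : nat) != j by [].
by rewrite (negbTE hj2) mul0r.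
Qed.

Lemma dir1 h K k (p : 'S_k) (e : k = K) (f : nat -> R) :
  \sum_(j < K) (\sum_(l < K) bn h l * permMx R K p l j) * f j = \sum_(a < k) bn h a * f (p a).
Proof.
subst K.
under eq_bigr do rewrite mulr_suml.
rewrite exchange_big /=; apply: eq_bigr => l _.
transitivity (\sum_(i < k) ((p l : nat) == i)%:R * (bn h l * f i)).
  by apply: eq_bigr => i _; rewrite permMx_cast cast_ord_id mulrCA mulrA.
by rewrite (@sum_delta k (p l) (fun i : 'I_k => bn h l * f i)).
Qed.

Lemma dir2 h K k (p : 'S_k) (e : k = K) (f : nat -> R) :
  \sum_(l < K) (\sum_(j < K) permMx R K p l j * bn h j) * f l = \sum_(a < k) bn h (p a) * f a.
Proof.
subst K; apply: eq_bigr => l _.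
under eq_bigr do rewrite permMx_cast cast_ord_id.
by rewrite (@sum_delta k (p l) (fun j : 'I_k => bn h j)).
Qed.

Lemma extract m (ks : 'I_m -> nat) (u v : forall i, 'I_(ks i) -> nat) (t : 'I_m -> R) (n h K : nat) :
  (forall al be : R, 0 < al < 1 -> 0 < be < 1 ->
     \sum_(i < m) t i * ((ks i)`!%:R * \sum_(a < ks i) (D (ks i) (u i a)).[al] * (D (ks i) (v i a)).[be]) = 0) ->
  (forall i a, (u i a < ks i)%N) ->
  (forall i : 'I_m, (i < n)%N -> ks i = K) ->
  (forall i : 'I_m, ~~ (i < n)%N -> (ks i <= h.-1)%N) ->
  (2 <= h)%N -> (h <= K)%N ->
  forall r, (0 < r < K)%N ->
  \sum_(i < m | (i < n)%N) t i * \sum_(a < ks i) bn h (u i a) * ((-1) ^+ (v i a) * ('C(r, v i a))%:R) = 0.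
Proof.
move=> H hu hK hsmall h2 hK' r hr.
have H1 : forall be : R, 0 < be < 1 -> \sum_(i < m | (i < n)%N) t i *
     \sum_(a < ks i) bn h (u i a) * (D (ks i) (v i a)).[be] = 0.
  move=> be hbe.
  pose Q := \sum_(i < m) (t i * (ks i)`!%:R) *:
     \sum_(a < ks i) ((D (ks i) (v i a)).[be]) *: D (ks i) (u i a).
  have Q0 : Q = 0.
    apply: poly_vanish => al hal; rewrite -(H al be hal hbe) /Q horner_sum; apply: eq_bigr => i _.
    rewrite hornerZ horner_sum mulrA; congr (_ * _); apply: eq_bigr => a _.
    by rewrite hornerZ mulrC.
  have := congr1 (fun q : {poly R} => q`_(h - 2)) Q0; rewrite /Q coef0 coef_sum.
  rewrite (bigID (fun i : 'I_m => (i < n)%N)) /= [X in _ + X]big1 ?addr0; last first.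
    move=> i hi; rewrite coefZ coef_sum big1 ?mulr0 // => a _.
    by rewrite coefZ coefD_high ?mulr0 //; have := hsmall i hi; lia.
  move=> E.
  have : ((K`!)%:R * mu K (h - 2)) * (\sum_(i < m | (i < n)%N) t i *
     \sum_(a < ks i) bn h (u i a) * (D (ks i) (v i a)).[be]) = 0.
    rewrite -[RHS]E mulr_sumr; apply: eq_bigr => i hi.
    have hki := hK i hi.
    rewrite coefZ coef_sum.
    transitivity ((t i * (ks i)`!%:R) * (mu (ks i) (h - 2) *
       \sum_(a < ks i) bn h (u i a) * (D (ks i) (v i a)).[be])).
      have e1 : (ks i)`!%:R = K`!%:R :> R by rewrite hki.
      have e2 : mu (ks i) (h - 2) = mu K (h - 2) by rewrite hki.
      by rewrite e1 e2; ring.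
    congr (_ * _); rewrite mulr_sumr; apply: eq_bigr => a _.
    rewrite coefZ coefD_mid; last by lia.
    have -> : (h - 2).+1 = h.-1 by lia.
    by rewrite -bn_alt; [ring | lia].
  move/eqP; rewrite mulf_eq0 mulf_eq0 (negbTE (fact_neq0 _)) (negbTE (mu_neq0 _ _)) /=.
  by move/eqP.
pose S := \sum_(i < m | (i < n)%N) t i *: \sum_(a < ks i) bn h (u i a) *: D (ks i) (v i a).
have S0 : S = 0.
  apply: poly_vanish => be hbe; rewrite -(H1 be hbe) /S horner_sum; apply: eq_bigr => i _.
  rewrite hornerZ horner_sum; congr (_ * _); apply: eq_bigr => a _.
  by rewrite hornerZ.
have := congr1 (fun q : {poly R} => q`_(r.-1)) S0; rewrite /S coef0 coef_sum => E.
have : mu K (r.-1) * \sum_(i < m | (i < n)%N) t i * \sum_(a < ks i) bn h (u i a) *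
   ((-1) ^+ (v i a) * ('C(r, v i a))%:R) = 0.
  rewrite -[RHS]E mulr_sumr; apply: eq_bigr => i hi.
  have hki := hK i hi.
  rewrite coefZ coef_sum.
  transitivity (t i * (mu (ks i) (r.-1) * \sum_(a < ks i) bn h (u i a) *
   ((-1) ^+ (v i a) * ('C(r, v i a))%:R))).
    have e2 : mu (ks i) (r.-1) = mu K (r.-1) by rewrite hki.
    by rewrite e2; ring.
  congr (_ * _); rewrite mulr_sumr; apply: eq_bigr => a _.
  rewrite coefZ coefD_mid; last by lia.
  have -> : (r.-1).+1 = r by lia.
  ring.
move/eqP; rewrite mulf_eq0 (negbTE (mu_neq0 _ _)) /=.
by move/eqP.
Qed.

Lemma bvecE K h (l : 'I_K) : bvec R K h l 0 = bn h l.
Proof. by rewrite mxE. Qed.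

Lemma covE K m n (ks : 'I_m -> nat) (pis : forall i, 'S_(ks i)) (t : 'I_m -> R) l j :
  covMx K n pis t l j = \sum_(i < m | (i < n)%N) t i * permMx R K (pis i) l j.
Proof. by rewrite /covMx summxE; apply: eq_bigr => i _; rewrite mxE. Qed.

Lemma xsum K m n h (ks : 'I_m -> nat) (pis : forall i, 'S_(ks i)) (t : 'I_m -> R) (f : nat -> R) :
  (forall i : 'I_m, (i < n)%N -> ks i = K) ->
  \sum_(j < K) ((bvec R K h)^T *m covMx K n pis t) 0 j * f j =
  \sum_(i < m | (i < n)%N) t i * \sum_(a < ks i) bn h a * f (pis i a).
Proof.
move=> hK.
transitivity (\sum_(j < K) \sum_(i < m | (i < n)%N) t i * ((\sum_(l < K) bn h l * permMx R K (pis i) l j) * f j)).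
  apply: eq_bigr => j _; rewrite mxE mulr_suml.
  under eq_bigr do rewrite mxE bvecE covE mulr_sumr mulr_suml.
  rewrite exchange_big /=; apply: eq_bigr => i _.
  rewrite mulr_suml mulr_sumr; apply: eq_bigr => l _; ring.
rewrite exchange_big /=; apply: eq_bigr => i hi.
by rewrite -mulr_sumr (dir1 _ _ _ _ (hK i hi)).
Qed.

Lemma ysum K m n h (ks : 'I_m -> nat) (pis : forall i, 'S_(ks i)) (t : 'I_m -> R) (f : nat -> R) :
  (forall i : 'I_m, (i < n)%N -> ks i = K) ->
  \sum_(l < K) (covMx K n pis t *m bvec R K h) l 0 * f l =
  \sum_(i < m | (i < n)%N) t i * \sum_(a < ks i) bn h (pis i a) * f a.
Proof.
move=> hK.
transitivity (\sum_(l < K) \sum_(i < m | (i < n)%N) t i * ((\sum_(j < K) permMx R K (pis i) l j * bn h j) * f l)).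
  apply: eq_bigr => l _; rewrite mxE mulr_suml.
  under eq_bigr do rewrite bvecE covE mulr_suml mulr_suml.
  rewrite exchange_big /=; apply: eq_bigr => i _.
  rewrite mulr_suml mulr_sumr; apply: eq_bigr => j _; ring.
rewrite exchange_big /=; apply: eq_bigr => i hi.
by rewrite -mulr_sumr (dir2 _ _ _ _ (hK i hi)).
Qed.

Lemma bn_sum h K : (2 <= h)%N -> (h <= K)%N -> \sum_(a < K) bn h a = 0.
Proof.
move=> h2 hK; rewrite -(big_mkord xpredT (bn h)) (big_cat_nat (n := h)) //=.
rewrite [X in _ + X]big_nat_cond [X in _ + X]big1 ?addr0; last first.
  by move=> b /andP[/andP[hb _] _]; rewrite /bn ltnNge hb.
case: h h2 {hK} => [|h] // h2.
rewrite -[RHS](@alt_sum h) //; apply: eq_big_nat => a ha.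
by rewrite bn_alt.
Qed.
End S.

Theorem lemma9 (R : realType) (m : nat) (ks : 'I_m -> nat)
    (pis : forall i : 'I_m, 'S_(ks i)) (t : 'I_m -> R) (n h : nat) :
  (forall al be : R, 0 < al < 1 -> 0 < be < 1 ->
     \sum_(i < m) t i * gradP (pis i) al be = 0) ->
  (n <= m)%N ->
  (forall i : 'I_m, (i < n)%N = (ks i == maxord ks)) ->
  (2 <= h)%N -> (h <= maxord ks)%N ->
  (forall i : 'I_m, (n <= i)%N -> (ks i <= h.-1)%N) ->
  covMx (maxord ks) n pis t *m bvec R (maxord ks) h = 0 /\
  (bvec R (maxord ks) h)^T *m covMx (maxord ks) n pis t = 0.
Proof.
move=> H hnm hks h2 hhK hsmall.
move: hks hhK; set K := maxord ks => hks hhK.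
have hK : forall i : 'I_m, (i < n)%N -> ks i = K by move=> i hi; apply/eqP; rewrite -hks.
have hsm : forall i : 'I_m, ~~ (i < n)%N -> (ks i <= h.-1)%N.
  by move=> i; rewrite -leqNgt; apply: hsmall.
have H1 : forall al be : R, 0 < al < 1 -> 0 < be < 1 ->
   \sum_(i < m) t i * ((ks i)`!%:R * \sum_(a < ks i) (D R (ks i) a).[al] *
      (D R (ks i) (pis i a)).[be]) = 0.
  move=> al be ha hb; rewrite -[RHS](H al be ha hb); apply: eq_bigr => i _.
  by rewrite gradP_D.
have H2 : forall al be : R, 0 < al < 1 -> 0 < be < 1 ->
   \sum_(i < m) t i * ((ks i)`!%:R * \sum_(a < ks i) (D R (ks i) (pis i a)).[al] *
      (D R (ks i) a).[be]) = 0.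
  move=> al be ha hb; rewrite -[RHS](H be al hb ha); apply: eq_bigr => i _.
  rewrite gradP_D //; congr (_ * (_ * _)); apply: eq_bigr => a _; exact: mulrC.
have E1 := @extract R m ks (fun i a => val a) (fun i a => val (pis i a)) t n h K H1
   (fun i a => ltn_ord a) hK hsm h2 hhK.
have E2 := @extract R m ks (fun i a => val (pis i a)) (fun i a => val a) t n h K H2
   (fun i a => ltn_ord (pis i a)) hK hsm h2 hhK.
have hK0 : (0 < K)%N by lia.
split.
  apply/matrixP => l j; rewrite [j]ord1 [RHS]mxE.
  apply: (@finish R K (fun l => (covMx K n pis t *m bvec R K h) l 0)).
  - move=> r hr /=; rewrite (@ysum R K m n h ks pis t (fun a : nat => (-1) ^+ a * ('C(r, a))%:R) hK); exact: E2.
  - transitivity (\sum_(l < K) (covMx K n pis t *m bvec R K h) l 0 * (fun _ => 1) l).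
      by apply: eq_bigr => a _; rewrite mulr1.
    rewrite (@ysum R K m n h ks pis t (fun _ => 1) hK) big1 // => i hi.
    under eq_bigr do rewrite mulr1.
    rewrite (reindex_inj (@perm_inj _ (pis i)^-1)) /=.
    under eq_bigr do rewrite permKV.
    by rewrite (hK i hi) bn_sum ?mulr0.
apply/matrixP => l j; rewrite [l]ord1 [RHS]mxE.
apply: (@finish R K (fun j => ((bvec R K h)^T *m covMx K n pis t) 0 j)).
- move=> r hr /=; rewrite (@xsum R K m n h ks pis t (fun a : nat => (-1) ^+ a * ('C(r, a))%:R) hK); exact: E1.
- transitivity (\sum_(j < K) ((bvec R K h)^T *m covMx K n pis t) 0 j * (fun _ => 1) j).
    by apply: eq_bigr => a _; rewrite mulr1.
  rewrite (@xsum R K m n h ks pis t (fun _ => 1) hK) big1 // => i hi.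
  under eq_bigr do rewrite mulr1.
  by rewrite (hK i hi) bn_sum ?mulr0.
Qed.
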